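(* Let $S$ be a lattice of finite length and let $(L_x)_{x\in S}$, $(\varphi_{yx})_{x\le y}$ be an $S$-connected system with the $L_x$ pairwise disjoint. On $U=\bigcup_{x\in S}L_x$ define $a\sim b$ (for $a\in L_x$, $b\in L_y$) iff there is $z\in S$ with $z\ge x\vee y$, $a\in\operatorname{dom}\varphi_{zx}$, $b\in\operatorname{dom}\varphi_{zy}$ and $\varphi_{zx}(a)=\varphi_{zy}(b)$. Then $\sim$ is an equivalence relation on $U$; letting $\pi:U\to U/{\sim}$ be the canonical projection, $\pi$ is injective on each $L_x$; and if $L^\pi_x:=\pi(L_x)$ is given the lattice structure making $\pi|_{L_x}:L_x\to L^\pi_x$ an isomorphism, then $(L^\pi_x)_{x\in S}$ is an $S$-glued system. Moreover, this $S$-glued system is monotone if and only if for all $x\prec y$ in $S$, $\operatorname{im}\varphi_{yx}\ne L_y$ and $\operatorname{dom}\varphi_{yx}\ne L_x$.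
   Context: Let $S$ be a lattice of finite length (every chain in $S$ is finite), with order $\le$, join $\vee$ and meet $\wedge$; $x\prec y$ means that $y$ covers $x$. A \emph{partial bijection} $\varphi$ from a set $A$ to a set $B$ is a bijection from a subset $\operatorname{dom}\varphi\subseteq A$ onto a subset $\operatorname{im}\varphi\subseteq B$ (possibly empty); composites $\psi\circ\varphi$ of partial maps are defined at $a$ iff $a\in\operatorname{dom}\varphi$ and $\varphi(a)\in\operatorname{dom}\psi$. An \emph{$S$-connected system} consists of lattices $L_x$ ($x\in S$) of finite length and partial bijections $\varphi_{yx}$ from $L_x$ to $L_y$ for all $x\le y$ in $S$ such that for all $x,y\in S$: (17) if $\varphi_{yx}\ne\emptyset$ then $\operatorname{dom}\varphi_{yx}$ is a filter of $L_x$, $\operatorname{im}\varphi_{yx}$ is an ideal of $L_y$ and $\varphi_{yx}$ is a lattice isomorphism between them; $\varphi_{xx}=\mathrm{id}_{L_x}$; (18) if $x\prec y$ then $\varphi_{yx}\ne\emptyset$; (19) for $x\le z\le y$: $\varphi_{yx}=\varphi_{yz}\circ\varphi_{zx}$; (20) $\operatorname{im}\varphi_{(x\vee y)x}\cap\operatorname{im}\varphi_{(x\vee y)y}\subseteq\operatorname{im}\varphi_{(x\vee y)(x\wedge y)}$; (20$^\delta$) $\operatorname{dom}\varphi_{x(x\wedge y)}\cap\operatorname{dom}\varphi_{y(x\wedge y)}\subseteq\operatorname{dom}\varphi_{(x\vee y)(x\wedge y)}$. An \emph{$S$-glued system} is a family $(L_x,\le_x)_{x\in S}$ of lattices of finite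 length (with least element $0_x$, greatest element $1_x$), whose underlying sets may overlap, such that for all $x,y\in S$: (1) if $x\le y$ and $L_x\cap L_y\ne\emptyset$, then $L_x\cap L_y$ is a filter of $L_x$ and an ideal of $L_y$; (2) in the situation of (1), for all $a,b\in L_x\cap L_y$: $a\le_x b$ iff $a\le_y b$; (3) if $x\prec y$ then $L_x\cap L_y\ne\emptyset$; (4) $L_x\cap L_y\subseteq L_{x\wedge y}\cap L_{x\vee y}$. The system is \emph{monotone} if for all $x\prec y$ in $S$ both $L_y\not\subseteq L_x$ and $L_x\not\subseteq L_y$. *)

(* Defs.v *)
From HB Require Import structures.
From Stdlib Require List.
From mathcomp Require Import all_boot all_order.
Set Implicit Arguments. Unset Strict Implicit. Unset Printing Implicit Defensive.
Import Order.Theory.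
Local Open Scope order_scope.

Section LatticeDefs.
Context {d : Order.disp_t} {T : latticeType d}.

Definition is_chain (C : T -> Prop) : Prop :=
  forall a b, C a -> C b -> (a <= b) \/ (b <= a).

Definition finite_length : Prop :=
  forall C : T -> Prop, is_chain C -> exists s : list T, forall a, C a -> List.In a s.

Definition covers (x y : T) : Prop := x < y /\ ~ (exists z, x < z /\ z < y).

Definition lfilter (F : T -> Prop) : Prop :=
  (exists a, F a) /\ (forall a b, F a -> a <= b -> F b) /\
  (forall a b, F a -> F b -> F (a `&` b)).

Definition lideal (I : T -> Prop) : Prop :=
  (exists a, I a) /\ (forall a b, I b -> a <= b -> I a) /\
  (forall a b, I a -> I b -> I (a `|` b)).
End LatticeDefs.
Arguments finite_length {d} T.

Definition pdom {A B : Type} (phi : A -> option B) (a : A) : Prop := phi a <> None.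
Definition pim {A B : Type} (phi : A -> option B) (b : B) : Prop := exists a, phi a = Some b.
Definition partial_bij {A B : Type} (phi : A -> option B) : Prop :=
  forall a a' b, phi a = Some b -> phi a' = Some b -> a = a'.

Definition plattice_iso {d1 d2 : Order.disp_t} {A : latticeType d1} {B : latticeType d2}
  (phi : A -> option B) : Prop :=
  partial_bij phi /\
  forall a a' b b', phi a = Some b -> phi a' = Some b' ->
    phi (a `&` a') = Some (b `&` b') /\ phi (a `|` a') = Some (b `|` b').

(* S-connected system; phi x y is the map written varphi_{yx} in the paper
   (from L_x to L_y), relevant only when x <= y. Lattices are nonempty. *)
Definition connected_system {d d' : Order.disp_t} {S : latticeType d}
  (L : S -> latticeType d') (phi : forall x y : S, L x -> option (L y)) : Prop :=
  (forall x, inhabited (L x)) /\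
  (forall x, finite_length (L x)) /\
  (forall x y, x <= y -> partial_bij (phi x y)) /\
  (* (17) *)
  (forall x y, x <= y -> (exists a, pdom (phi x y) a) ->
     lfilter (pdom (phi x y)) /\ lideal (pim (phi x y)) /\ plattice_iso (phi x y)) /\
  (forall x a, phi x x a = Some a) /\
  (* (18) *)
  (forall x y, covers x y -> exists a, pdom (phi x y) a) /\
  (* (19) *)
  (forall x z y, x <= z -> z <= y -> forall a, phi x y a = obind (phi z y) (phi x z a)) /\
  (* (20) *)
  (forall x y b, pim (phi x (x `|` y)) b -> pim (phi y (x `|` y)) b ->
     pim (phi (x `&` y) (x `|` y)) b) /\
  (* (20^delta) *)
  (forall x y a, pdom (phi (x `&` y) x) a -> pdom (phi (x `&` y) y) a ->
     pdom (phi (x `&` y) (x `|` y)) a).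

Definition sim {d d' : Order.disp_t} {S : latticeType d}
  {L : S -> latticeType d'} (phi : forall x y : S, L x -> option (L y))
  (u v : {x : S & L x}) : Prop :=
  exists z, projT1 u `|` projT1 v <= z /\
    exists c, phi (projT1 u) z (projT2 u) = Some c /\ phi (projT1 v) z (projT2 v) = Some c.

Definition is_equivalence_rel {U : Type} (R : U -> U -> Prop) : Prop :=
  (forall u, R u u) /\ (forall u v, R u v -> R v u) /\
  (forall u v w, R u v -> R v w -> R u w).

Section SetLattice.
Variables (V : Type) (A : V -> Prop) (le : V -> V -> Prop).

Definition is_lub (p q m : V) : Prop :=
  A m /\ le p m /\ le q m /\ forall u, A u -> le p u -> le q u -> le m u.
Definition is_glb (p q m : V) : Prop :=
  A m /\ le m p /\ le m q /\ forall u, A u -> le u p -> le u q -> le u m.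

Definition set_lattice : Prop :=
  (exists p, A p) /\
  (forall p, A p -> le p p) /\
  (forall p q, A p -> A q -> le p q -> le q p -> p = q) /\
  (forall p q r, A p -> A q -> A r -> le p q -> le q r -> le p r) /\
  (forall p q, A p -> A q -> exists m, is_lub p q m) /\
  (forall p q, A p -> A q -> exists m, is_glb p q m).

Definition set_finite_length : Prop :=
  forall C : V -> Prop, (forall p, C p -> A p) ->
    (forall p q, C p -> C q -> le p q \/ le q p) ->
    exists s : list V, forall p, C p -> List.In p s.

Definition set_filter (F : V -> Prop) : Prop :=
  (exists p, F p) /\ (forall p, F p -> A p) /\
  (forall p q, F p -> A q -> le p q -> F q) /\
  (forall p q m, F p -> F q -> is_glb p q m -> F m).

Definition set_ideal (I : V -> Prop) : Prop :=
  (exists p, I p) /\ (forall p, I p -> A p) /\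
  (forall p q, I q -> A p -> le p q -> I p) /\
  (forall p q m, I p -> I q -> is_lub p q m -> I m).
End SetLattice.

(* S-glued system: carriers A x (subsets of V) with orders le x *)
Definition glued_system {d : Order.disp_t} {S : latticeType d} {V : Type}
  (A : S -> V -> Prop) (le : S -> V -> V -> Prop) : Prop :=
  (forall x, set_lattice (A x) (le x) /\ set_finite_length (A x) (le x)) /\
  (* (1) *)
  (forall x y, x <= y -> (exists p, A x p /\ A y p) ->
     set_filter (A x) (le x) (fun p => A x p /\ A y p) /\
     set_ideal (A y) (le y) (fun p => A x p /\ A y p)) /\
  (* (2) *)
  (forall x y, x <= y -> forall p q, A x p -> A y p -> A x q -> A y q ->
     (le x p q <-> le y p q)) /\
  (* (3) *)
  (forall x y, covers x y -> exists p, A x p /\ A y p) /\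
  (* (4) *)
  (forall x y p, A x p -> A y p -> A (x `&` y) p /\ A (x `|` y) p).

Definition monotone_glued {d : Order.disp_t} {S : latticeType d} {V : Type}
  (A : S -> V -> Prop) : Prop :=
  forall x y : S, covers x y ->
    ~ (forall p, A y p -> A x p) /\ ~ (forall p, A x p -> A y p).

Definition proj_carrier {d d' : Order.disp_t} {S : latticeType d}
  {L : S -> latticeType d'} {Q : Type} (pi : {x : S & L x} -> Q) (x : S) (q : Q) : Prop :=
  exists a : L x, pi (existT _ x a) = q.

Definition proj_le {d d' : Order.disp_t} {S : latticeType d}
  {L : S -> latticeType d'} {Q : Type} (pi : {x : S & L x} -> Q) (x : S) (p q : Q) : Prop :=
  exists a b : L x, pi (existT _ x a) = p /\ pi (existT _ x b) = q /\ a <= b.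

(* Main.v *)
Require Import Defs.
From HB Require Import structures.
From mathcomp Require Import all_boot all_order.
From Stdlib Require Import Classical.
Import Order.Theory.
Local Open Scope order_scope.

Theorem theorem4p2 (d d' : Order.disp_t) (S : latticeType d)
  (L : S -> latticeType d') (phi : forall x y : S, L x -> option (L y)) :
  finite_length S ->
  connected_system phi ->
  is_equivalence_rel (sim phi) /\
  forall (Q : Type) (pi : {x : S & L x} -> Q),
    (forall q, exists u, pi u = q) ->
    (forall u v, pi u = pi v <-> sim phi u v) ->
    (forall x : S, injective (fun a : L x => pi (existT _ x a))) /\
    glued_system (proj_carrier pi) (proj_le pi) /\
    (monotone_glued (proj_carrier pi) <->
     forall x y : S, covers x y ->
       (exists b, ~ pim (phi x y) b) /\ (exists a, ~ pdom (phi x y) a)).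
Proof.
move=> _ [Hinh [Hfl [Hbij [H17 [Hid [H18 [H19 [H20 H20d]]]]]]]].
have comp : forall x z y a c, x <= z -> z <= y -> phi x y a = Some c ->
    exists b, phi x z a = Some b /\ phi z y b = Some c.
  move=> x z y a c Hxz Hzy; rewrite (H19 x z y Hxz Hzy a).
  by case: (phi x z a) => [b|] //= E; exists b.
have comp2 : forall x z y a b c, x <= z -> z <= y -> phi x z a = Some b ->
    phi z y b = Some c -> phi x y a = Some c.
  by move=> x z y a b c Hxz Hzy E1 E2; rewrite (H19 x z y Hxz Hzy a) E1.
have K : forall x y (a : L x) (b : L y), x <= y ->
    (sim phi (existT _ x a) (existT _ y b) <-> phi x y a = Some b).
  move=> x y a b Hxy; split.
    move=> [z [/= Hz [c [/= H1 H2]]]].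
    have Hyz : y <= z by apply: le_trans Hz; exact: leUr.
    have [b' [E1 E2]] := comp x y z a c Hxy Hyz H1.
    by rewrite E1; congr Some; apply: (Hbij y z Hyz _ _ c).
  move=> E; exists y; split; first by rewrite /= (join_idPr Hxy).
  by exists b; split => //=; apply: Hid.
have Heq : is_equivalence_rel (sim phi).
  split; [|split].
  - move=> [x a]; exists x; split; first by rewrite /= joinxx.
    by exists a; split; apply: Hid.
  - move=> u v [z [Hz [c [H1 H2]]]]; exists z; split; first by rewrite joinC.
    by exists c.
  - move=> [x a] [y b] [w c] [z1 [/= Hz1 [c1 [/= H1 H2]]]] [z2 [/= Hz2 [c2 [/= H3 H4]]]].
    move: Hz1 Hz2; rewrite !leUx => /andP [Hx1 Hy1] /andP [Hy2 Hw2].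
    have Hym : y <= z1 `&` z2 by rewrite lexI Hy1 Hy2.
    have [b' [E1 E2]] := comp y _ z1 b c1 Hym (leIl _ _) H2.
    have [b'' [E3 E4]] := comp y _ z2 b c2 Hym (leIr _ _) H3.
    have Eb : b'' = b' by move: E3; rewrite E1 => -[].
    subst b''.
    have [e He] : exists e, phi (z1 `&` z2) (z1 `|` z2) b' = Some e.
      case E: (phi (z1 `&` z2) (z1 `|` z2) b') => [e|]; first by exists e.
      by exfalso; apply: (H20d z1 z2 b' _ _ E); rewrite /pdom ?E2 ?E4.
    have Hmz : z1 `&` z2 <= z1 `|` z2 by apply: le_trans (leIl _ _) (leUl _ _).
    have F1 : phi z1 (z1 `|` z2) c1 = Some e.
      by move: He; rewrite (H19 _ z1 _ (leIl _ _) (leUl _ _) b') E2.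
    have F2 : phi z2 (z1 `|` z2) c2 = Some e.
      by move: He; rewrite (H19 _ z2 _ (leIr _ _) (leUr _ _) b') E4.
    exists (z1 `|` z2); split; first by rewrite /= leU2.
    exists e; split => /=.
      exact: (comp2 _ _ _ _ _ _ Hx1 (leUl _ _) H1 F1).
    exact: (comp2 _ _ _ _ _ _ Hw2 (leUr _ _) H4 F2).
split => //.

move=> Q pi Hsurj Hpi.
set P := fun x (a : L x) => pi (existT _ x a).
have inj : forall x : S, injective (P x).
  move=> x a b /Hpi [z [/= Hz [c [/= H1 H2]]]].
  have Hxz : x <= z by apply: le_trans Hz; exact: leUl.
  exact: (Hbij x z Hxz _ _ c).
have KP : forall x y (a : L x) (b : L y), x <= y ->
    (P x a = P y b <-> phi x y a = Some b).
  move=> x y a b Hxy; rewrite -(K x y a b Hxy); exact: Hpi.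
have leP : forall x (a b : L x), proj_le pi x (P x a) (P x b) <-> a <= b.
  move=> x a b; split.
    by move=> [a' [b' [/inj -> [/inj -> H]]]].
  by move=> H; exists a, b.
have I1 : forall x y, x <= y -> forall a : L x,
    (proj_carrier pi y (P x a) <-> pdom (phi x y) a).
  move=> x y Hxy a; split.
    by move=> [b Eb]; move/esym: Eb => /(KP _ _ _ _ Hxy) E; rewrite /pdom E.
  case E: (phi x y a) => [b|] // _; exists b; symmetry; exact/(KP _ _ _ _ Hxy).
have I2 : forall x y, x <= y -> forall b : L y,
    (proj_carrier pi x (P y b) <-> pim (phi x y) b).
  move=> x y Hxy b; split.
    by move=> [a Ea]; exists a; apply/(KP _ _ _ _ Hxy).
  by move=> [a Ea]; exists a; apply/(KP _ _ _ _ Hxy).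
have glbP : forall x (a b : L x) m,
    is_glb (proj_carrier pi x) (proj_le pi x) (P x a) (P x b) m -> m = P x (a `&` b).
  move=> x a b m [[c Ec] [Hca [Hcb Hmax]]]; subst m.
  move/leP: Hca => Hca; move/leP: Hcb => Hcb.
  congr (P x); apply: le_anti; rewrite lexI Hca Hcb /=.
  by apply/leP; apply: Hmax; [exists (a `&` b) | apply/leP; exact: leIl | apply/leP; exact: leIr].
have lubP : forall x (a b : L x) m,
    is_lub (proj_carrier pi x) (proj_le pi x) (P x a) (P x b) m -> m = P x (a `|` b).
  move=> x a b m [[c Ec] [Hca [Hcb Hmax]]]; subst m.
  move/leP: Hca => Hca; move/leP: Hcb => Hcb.
  congr (P x); apply: le_anti; rewrite leUx Hca Hcb /= andbT.
  by apply/leP; apply: Hmax; [exists (a `|` b) | apply/leP; exact: leUl | apply/leP; exact: leUr].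
have isoLe : forall x y, x <= y -> forall (a a' : L x) b b', phi x y a = Some b ->
    phi x y a' = Some b' -> (a <= a' <-> b <= b').
  move=> x y Hxy a a' b b' E E'.
  have [_ [_ [Hpb Hm]]] : lfilter (pdom (phi x y)) /\ lideal (pim (phi x y)) /\ plattice_iso (phi x y).
    by apply: H17 => //; exists a; rewrite /pdom E.
  have [Em _] := Hm a a' b b' E E'.
  split.
    move/meet_idPl => Ea; move: Em; rewrite Ea E => -[Eb].
    by apply/meet_idPl; rewrite -Eb.
  move/meet_idPl => Eb; move: Em; rewrite Eb => Em.
  by apply/meet_idPl; apply: (Hpb _ _ b Em E).
split; first exact: inj.

split.
  split; [|split; [|split; [|split]]].
  - move=> x; split.
      split; [|split; [|split; [|split; [|split]]]].
      + by case: (Hinh x) => a; exists (P x a), a.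
      + by move=> p [a <-]; exists a, a.
      + move=> p q [a <-] [b <-] /leP Hab /leP Hba.
        by congr (P x); apply: le_anti; rewrite Hab Hba.
      + move=> p q r [a <-] [b <-] [c <-] /leP Hab /leP Hbc.
        by apply/leP; apply: le_trans Hbc.
      + move=> p q [a <-] [b <-]; exists (P x (a `|` b)).
        split; first by exists (a `|` b).
        split; first by apply/leP; exact: leUl.
        split; first by apply/leP; exact: leUr.
        move=> u [c <-] /leP Hac /leP Hbc; apply/leP; by rewrite leUx Hac Hbc.
      + move=> p q [a <-] [b <-]; exists (P x (a `&` b)).
        split; first by exists (a `&` b).
        split; first by apply/leP; exact: leIl.
        split; first by apply/leP; exact: leIr.
        move=> u [c <-] /leP Hac /leP Hbc; apply/leP; by rewrite lexI Hac Hbc.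
    move=> C HC Hch.
    have [s Hs] := Hfl x (fun a => C (P x a)) (fun a b Ca Cb =>
      match Hch _ _ Ca Cb with
      | or_introl H => or_introl (proj1 (leP x a b) H)
      | or_intror H => or_intror (proj1 (leP x b a) H) end).
    exists (List.map (P x) s) => p Cp.
    have [a Ea] := HC p Cp; subst p.
    by apply: List.in_map; apply: Hs.
  - move=> x y Hxy [p [[a Ea] Hyp]]; subst p.
    have Hda := proj1 (I1 x y Hxy a) Hyp.
    have [Hfil [Hidl _]] := H17 x y Hxy (ex_intro _ a Hda).
    split.
      split; [|split; [|split]].
      + by exists (P x a); split => //; exists a.
      + by move=> p [].
      + move=> p q [[a1 Ea1] Hy1] [a2 Ea2] /=; subst p q => /leP H12.
        split; first by exists a2.
        apply/(I1 x y Hxy); apply: (proj1 (proj2 Hfil)) H12.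
        exact/(I1 x y Hxy).
      + move=> p q m [[a1 Ea1] Hy1] [[a2 Ea2] Hy2] Hm; subst p q.
        rewrite (glbP _ _ _ _ Hm); split; first by exists (a1 `&` a2).
        apply/(I1 x y Hxy); apply: (proj2 (proj2 Hfil)); exact/(I1 x y Hxy).
    split; [|split; [|split]].
    + by exists (P x a); split => //; exists a.
    + by move=> p [].
    + move=> p q [Hxq [b1 Eb1]] [b2 Eb2] /=; subst p q => /leP H21.
      split; last by exists b2.
      apply/(I2 x y Hxy); apply: (proj1 (proj2 Hidl)) H21.
      exact/(I2 x y Hxy).
    + move=> p q m [Hx1 [b1 Eb1]] [Hx2 [b2 Eb2]] Hm; subst p q.
      rewrite (lubP _ _ _ _ Hm); split; last by exists (b1 `|` b2).
      apply/(I2 x y Hxy); apply: (proj2 (proj2 Hidl)); exact/(I2 x y Hxy).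
  - move=> x y Hxy p q [a Ea] Hyp [a' Ea'] Hyq; subst p q.
    move: Hyp Hyq => [b Eb] [b' Eb'].
    rewrite leP -Eb -Eb' leP.
    move/esym: Eb => /(KP _ _ _ _ Hxy) Eb; move/esym: Eb' => /(KP _ _ _ _ Hxy) Eb'.
    exact: isoLe Eb Eb'.
  - move=> x y Hc; have [a Ha] := H18 x y Hc.
    have Hxy : x <= y by case: Hc => /ltW.
    case E: (phi x y a) Ha => [b|] // _.
    exists (P x a); split; first by exists a.
    by exists b; symmetry; apply/(KP _ _ _ _ Hxy).
  - move=> x y p [a Ea] [b Eb]; subst p.
    move/Hpi: Eb => /(proj1 (proj2 Heq)) [z [/= Hz [c [/= H1 H2]]]].
    have Hxz : x `|` y <= z by [].
    have [a1 [E1 F1]] := comp x _ z a c (leUl _ _) Hxz H1.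
    have [b1 [E2 F2]] := comp y _ z b c (leUr _ _) Hxz H2.
    have Eab : a1 = b1 by apply: (Hbij _ z Hxz _ _ c).
    subst b1.
    have Pa : P x a = P (x `|` y) a1 by apply/(KP _ _ _ _ (leUl _ _)).
    split; last by exists a1.
    have [e He] := H20 x y a1 (ex_intro _ a E1) (ex_intro _ b E2).
    exists e; change (P (x `&` y) e = P x a); rewrite Pa; apply/(KP _ _ _ _ _) => //.
    exact: le_trans (leIl _ _) (leUl _ _).

have E1 : forall x y, x <= y -> ((forall p, proj_carrier pi y p -> proj_carrier pi x p) <->
    (forall b, pim (phi x y) b)).
  move=> x y Hxy; split.
    by move=> H b; apply/(I2 x y Hxy); apply: H; exists b.
  by move=> H p [b <-]; apply/(I2 x y Hxy).
have E2 : forall x y, x <= y -> ((forall p, proj_carrier pi x p -> proj_carrier pi y p) <->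
    (forall a, pdom (phi x y) a)).
  move=> x y Hxy; split.
    by move=> H a; apply/(I1 x y Hxy); apply: H; exists a.
  by move=> H p [a <-]; apply/(I1 x y Hxy).
have NA : forall (T : Type) (R : T -> Prop), ~ (forall t, R t) <-> exists t, ~ R t.
  move=> T R; split; first exact: not_all_ex_not.
  by move=> [t Ht] H; apply: Ht.
split.
  move=> H x y Hc; have Hxy : x <= y by case: Hc => /ltW.
  have [H1 H2] := H x y Hc.
  split.
    apply: (proj1 (NA _ (pim (phi x y)))) => Hall; apply: H1; exact/(E1 x y Hxy).
  apply: (proj1 (NA _ (pdom (phi x y)))) => Hall; apply: H2; exact/(E2 x y Hxy).
move=> H x y Hc; have Hxy : x <= y by case: Hc => /ltW.
have [H1 H2] := H x y Hc.
split.
  by move/(E1 x y Hxy); apply: (proj2 (NA _ (pim (phi x y)))).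
by move/(E2 x y Hxy); apply: (proj2 (NA _ (pdom (phi x y)))).
Qed.
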